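(* Let $\mathcal{C}$ be a covering of a finite set $E$ satisfying the condition (EQU): for every $K\in\mathcal{C}$ and all $x,y\in K$, the number of blocks of $\mathcal{C}$ containing $x$ equals the number of blocks of $\mathcal{C}$ containing $y$. Then $\{N(x):x\in E\}$ forms a partition of $E$, where $N(x)=\bigcap\{K\in\mathcal{C}:x\in K\}$.
   Context: A covering of $E$ is a family of nonempty subsets (blocks) of $E$ with union $E$. ''$\{N(x):x\in E\}$ forms a partition'' means the distinct sets among the $N(x)$ are pairwise disjoint (their union is $E$ since $x\in N(x)$). *)

(* Defs.v *)
From mathcomp Require Import all_boot.
Set Implicit Arguments. Unset Strict Implicit. Unset Printing Implicit Defensive.

Definition is_covering (T : finType) (E : {set T}) (C : {set {set T}}) : Prop :=
  (forall K, K \in C -> K != set0 /\ K \subset E) /\ cover C = E.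

Definition deg (T : finType) (C : {set {set T}}) (x : T) : nat :=
  #|[set K in C | x \in K]|.

Definition EQU (T : finType) (C : {set {set T}}) : Prop :=
  forall K, K \in C -> forall x y, x \in K -> y \in K -> deg C x = deg C y.

Definition Nbhd (T : finType) (C : {set {set T}}) (x : T) : {set T} :=
  \bigcap_(K in C | x \in K) K.

(* Main.v *)
Require Import Defs.
From mathcomp Require Import all_boot.

Lemma key (T : finType) (E : {set T}) (C : {set {set T}}) x y :
  is_covering E C -> EQU C -> x \in E -> y \in Nbhd C x -> Nbhd C y = Nbhd C x.
Proof.
move=> [HC Hcov] Heq xE yN.
have sub : [set K in C | x \in K] \subset [set K in C | y \in K].
  apply/subsetP => K; rewrite !inE => /andP[KC xK]; rewrite KC /=.
  by move/bigcapP: yN; apply; rewrite KC.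
have [K0 K0C xK0] : exists2 K0, K0 \in C & x \in K0.
  by move: xE; rewrite -Hcov => /bigcupP[K0 ? ?]; exists K0.
have yK0 : y \in K0 by move/bigcapP: yN; apply; rewrite K0C.
have dxy := Heq K0 K0C x y xK0 yK0.
have eqB : [set K in C | x \in K] = [set K in C | y \in K].
  by apply/eqP; rewrite eqEcard sub /=; move: dxy; rewrite /deg => ->.
rewrite /Nbhd; apply: eq_bigl => K.
by move/setP: eqB => /(_ K); rewrite !inE => ->.
Qed.

Lemma selfN (T : finType) (C : {set {set T}}) x : x \in Nbhd C x.
Proof. by apply/bigcapP => K /andP[]. Qed.

Theorem proposition21 (T : finType) (E : {set T}) (C : {set {set T}}) :
  is_covering E C -> EQU C ->
  partition [set Nbhd C x | x in E] E.
Proof.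
move=> Hc He; have [HC Hcov] := Hc.
apply/and3P; split.
- apply/eqP/setP => z; apply/bigcupP/idP.
  + move=> [A /imsetP[x xE ->] zN].
    have [K0 K0C xK0] : exists2 K0, K0 \in C & x \in K0.
      by move: xE; rewrite -Hcov => /bigcupP[K0 ? ?]; exists K0.
    have zK0 : z \in K0 by move/bigcapP: zN; apply; rewrite K0C.
    by have [_ /subsetP] := HC K0 K0C; apply.
  + by move=> zE; exists (Nbhd C z); [apply/imsetP; exists z | apply: selfN].
- apply/trivIsetP => A B /imsetP[x xE ->] /imsetP[y yE ->] neq.
  apply/pred0P => z /=; apply/negbTE/negP => /andP[zx zy].
  move/negP: neq; apply; apply/eqP.
  by rewrite -(@key _ _ _ _ _ Hc He xE zx) (@key _ _ _ _ _ Hc He yE zy).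
- apply/imsetP => -[x _ e]; by have := @selfN _ C x; rewrite -e inE.
Qed.
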